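(* Let $G$ be a two-step nilpotent group and let $a,b,c,d,m,n$ be integers. If $S\colon G^2\to G^2$, $S(x,y)=\bigl(x^ay^b[y,x]^m,\;x^cy^d[y,x]^n\bigr)$, is a solution of the Yang--Baxter equation on $G$, then $\bar S\colon G^2\to G^2$, $\bar S(x,y)=\bigl(x^dy^c[y,x]^{dc-n},\;x^by^a[y,x]^{ab-m}\bigr)$, is also a solution of the Yang--Baxter equation on $G$.
   Context: A two-step nilpotent group is a group of nilpotency class at most $2$ (all commutators central); commutators are $[x,y]=x^{-1}y^{-1}xy$. A map $S\colon X^2\to X^2$ is a solution of the Yang--Baxter equation on $X$ if $S_1S_2S_1=S_2S_1S_2$ on $X^3$, where $S_1=S\times\mathrm{Id}$, $S_2=\mathrm{Id}\times S$. *)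

(* Defs.v *)
From Stdlib Require Import ZArith.

Record Group := {
  carrier :> Type;
  gmul : carrier -> carrier -> carrier;
  gone : carrier;
  ginv : carrier -> carrier;
  gmulA : forall x y z, gmul x (gmul y z) = gmul (gmul x y) z;
  gmul1l : forall x, gmul gone x = x;
  gmul1r : forall x, gmul x gone = x;
  gmulVl : forall x, gmul (ginv x) x = gone;
  gmulVr : forall x, gmul x (ginv x) = gone
}.

Arguments gmul {g}.
Arguments gone {g}.
Arguments ginv {g}.

Fixpoint gnpow {G : Group} (x : G) (n : nat) : G :=
  match n with
  | O => gone
  | S k => gmul x (gnpow x k)
  end.

Definition gzpow {G : Group} (x : G) (z : Z) : G :=
  match z with
  | Z0 => gone
  | Zpos p => gnpow x (Pos.to_nat p)
  | Zneg p => ginv (gnpow x (Pos.to_nat p))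
  end.

Definition gcomm {G : Group} (x y : G) : G :=
  gmul (gmul (gmul (ginv x) (ginv y)) x) y.

Definition two_step_nilpotent (G : Group) : Prop :=
  forall x y z : G, gmul (gcomm x y) z = gmul z (gcomm x y).

Definition S1 {X : Type} (S : X * X -> X * X) (t : X * X * X) : X * X * X :=
  let '(x, y, z) := t in let '(u, v) := S (x, y) in (u, v, z).
Definition S2 {X : Type} (S : X * X -> X * X) (t : X * X * X) : X * X * X :=
  let '(x, y, z) := t in let '(v, w) := S (y, z) in (x, v, w).

Definition is_YB_solution {X : Type} (S : X * X -> X * X) : Prop :=
  forall t : X * X * X, S1 S (S2 S (S1 S t)) = S2 S (S1 S (S2 S t)).

Definition Smap {G : Group} (a b c d m n : Z) (p : G * G) : G * G :=
  let '(x, y) := p in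
  (gmul (gmul (gzpow x a) (gzpow y b)) (gzpow (gcomm y x) m),
   gmul (gmul (gzpow x c) (gzpow y d)) (gzpow (gcomm y x) n)).

(* Main.v *)
Require Import Defs.
From Stdlib Require Import ZArith Lia.

Section GroupLemmas.
Variable G : Group.
Implicit Types x y z u v w : G.

Lemma mulVK x y : gmul (gmul x (ginv y)) y = x.
Proof. rewrite <- gmulA, gmulVl, gmul1r. reflexivity. Qed.
Lemma mulKV x y : gmul (gmul x y) (ginv y) = x.
Proof. rewrite <- gmulA, gmulVr, gmul1r. reflexivity. Qed.

Lemma inv_uniq x y : gmul x y = gone -> y = ginv x.
Proof.
  intro H. rewrite <- (gmul1l _ y), <- (gmulVl _ x), <- gmulA, H, gmul1r. reflexivity.
Qed.
Lemma ginv_mul x y : ginv (gmul x y) = gmul (ginv y) (ginv x).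
Proof.
  symmetry. apply inv_uniq. rewrite !gmulA, mulKV, gmulVr. reflexivity.
Qed.
Lemma ginv_ginv x : ginv (ginv x) = x.
Proof. symmetry. apply inv_uniq. apply gmulVl. Qed.
Lemma ginv_one : ginv (@gone G) = gone.
Proof. symmetry. apply inv_uniq. apply gmul1l. Qed.

Ltac gsimpl := repeat progress (rewrite ?ginv_mul, ?ginv_ginv, ?ginv_one, ?gmulA,
  ?mulVK, ?mulKV, ?gmulVl, ?gmulVr, ?gmul1l, ?gmul1r).

Lemma gzpow_succ x k : gzpow x (k + 1) = gmul (gzpow x k) x.
Proof.
  assert (Hc : forall n, gmul x (gnpow x n) = gmul (gnpow x n) x).
  { induction n; simpl. rewrite gmul1l, gmul1r; reflexivity.
    rewrite <- gmulA, IHn. reflexivity. }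
  destruct k as [|p|p]; simpl.
  - rewrite gmul1l, gmul1r. reflexivity.
  - replace (Pos.to_nat (p + 1)) with (S (Pos.to_nat p)) by lia. simpl. apply Hc.
  - destruct (Pos.eq_dec p 1) as [->|Hp]; simpl.
    + rewrite gmul1r, gmulVl. reflexivity.
    + replace (Z.pos_sub 1 p) with (Z.neg (Pos.pred p)).
      2:{ rewrite Z.pos_sub_lt by lia. f_equal. lia. }
      simpl.
      replace (Pos.to_nat p) with (S (Pos.to_nat (Pos.pred p))) by lia.
      simpl. gsimpl. reflexivity.
Qed.

Lemma gzpow_pred x k : gzpow x (k - 1) = gmul (gzpow x k) (ginv x).
Proof.
  pose proof (gzpow_succ x (k - 1)) as H. replace (k - 1 + 1)%Z with k in H by lia.
  rewrite H. gsimpl. reflexivity.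
Qed.

Lemma gzpow_add x a b : gzpow x (a + b) = gmul (gzpow x a) (gzpow x b).
Proof.
  induction b using Z.peano_ind.
  - rewrite Z.add_0_r. simpl. rewrite gmul1r. reflexivity.
  - rewrite <- Z.add_1_r, Z.add_assoc, !gzpow_succ, IHb. gsimpl. reflexivity.
  - rewrite <- Z.sub_1_r, Z.add_sub_assoc, !gzpow_pred, IHb. gsimpl. reflexivity.
Qed.

Lemma gzpow_opp x a : gzpow x (- a) = ginv (gzpow x a).
Proof.
  apply inv_uniq. rewrite <- gzpow_add. replace (a + - a)%Z with 0%Z by lia. reflexivity.
Qed.

Lemma gzpow_mul x a b : gzpow x (a * b) = gzpow (gzpow x a) b.
Proof.
  induction b using Z.peano_ind.
  - rewrite Z.mul_0_r. reflexivity.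
  - rewrite <- Z.add_1_r, Z.mul_add_distr_l, Z.mul_1_r, gzpow_add, gzpow_succ, IHb.
    reflexivity.
  - rewrite <- Z.sub_1_r, Z.mul_sub_distr_l, Z.mul_1_r, gzpow_pred.
    unfold Z.sub. rewrite gzpow_add, gzpow_opp, IHb. reflexivity.
Qed.

Lemma hom_pow (f : G -> G) (Hf : forall u v, f (gmul u v) = gmul (f u) (f v)) u k :
  f (gzpow u k) = gzpow (f u) k.
Proof.
  assert (H1 : f gone = gone).
  { assert (E : f gone = gmul (f gone) (f gone)) by (rewrite <- Hf, gmul1r; reflexivity).
    transitivity (gmul (gmul (f gone) (f gone)) (ginv (f gone))).
    - rewrite mulKV. reflexivity.
    - rewrite <- E, gmulVr. reflexivity. }
  assert (Hi : forall v, f (ginv v) = ginv (f v)).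
  { intro v. apply inv_uniq. rewrite <- Hf, gmulVr. exact H1. }
  induction k using Z.peano_ind.
  - exact H1.
  - rewrite <- Z.add_1_r, !gzpow_succ, Hf, IHk. reflexivity.
  - rewrite <- Z.sub_1_r, !gzpow_pred, Hf, Hi, IHk. reflexivity.
Qed.

Hypothesis Hnil : two_step_nilpotent G.

Lemma comm_l u v w : gcomm (gmul u v) w = gmul (gcomm u w) (gcomm v w).
Proof.
  transitivity (gmul (gmul (ginv v) (gmul (gcomm u w) v)) (gcomm v w)).
  - unfold gcomm. gsimpl. reflexivity.
  - rewrite Hnil. gsimpl. reflexivity.
Qed.

Lemma comm_r u v w : gcomm u (gmul v w) = gmul (gcomm u v) (gcomm u w).
Proof.
  rewrite (Hnil u v (gcomm u w)).
  transitivity (gmul (gcomm u w) (gmul (ginv w) (gmul (gcomm u v) w))).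
  - unfold gcomm. gsimpl. reflexivity.
  - rewrite (Hnil u v w). gsimpl. reflexivity.
Qed.

Lemma key x y p q k :
  gmul (gmul (gzpow x p) (gzpow y q)) (gzpow (gcomm y x) (p * q - k))
  = gmul (gmul (gzpow y q) (gzpow x p)) (gzpow (gcomm x y) k).
Proof.
  assert (E1 : forall s t : G, gmul s t = gmul (gmul t s) (gcomm s t)).
  { intros s t. unfold gcomm. gsimpl. reflexivity. }
  rewrite (E1 (gzpow y q) (gzpow x p)).
  rewrite (hom_pow (fun s => gcomm s (gzpow x p)) (fun u v => comm_l u v _)).
  rewrite (hom_pow (fun s => gcomm y s) (fun u v => comm_r y u v)).
  rewrite <- gzpow_mul.
  assert (E2 : gcomm x y = ginv (gcomm y x)).
  { apply inv_uniq. unfold gcomm. gsimpl. reflexivity. }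
  rewrite E2.
  replace (ginv (gcomm y x)) with (gzpow (gcomm y x) (-1)) by
    (simpl; rewrite gmul1r; reflexivity).
  rewrite <- gzpow_mul.
  rewrite <- !gmulA, <- gzpow_add. repeat f_equal. all: try lia.
Qed.

End GroupLemmas.

Definition Tw {X : Type} (S : X * X -> X * X) (p : X * X) : X * X :=
  let '(u, v) := S (snd p, fst p) in (v, u).

Lemma YB_Tw {X : Type} (S : X * X -> X * X) : is_YB_solution S -> is_YB_solution (Tw S).
Proof.
  intros H [[x y] z]. specialize (H (z, y, x)).
  unfold S1, S2, Tw in *. simpl in *.
  repeat match goal with
  | |- context [S ?p] => let e := fresh "E" in destruct (S p) as [? ?] eqn:e; simpl in H |- *
  | _ => lazymatch type of H with context [S ?p] => let e := fresh "E" in destruct (S p) as [? ?] eqn:e; simpl in H |- * end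
  end.
  inversion H. reflexivity.
Qed.

Lemma YB_ext {X : Type} (S S' : X * X -> X * X) :
  (forall p, S p = S' p) -> is_YB_solution S -> is_YB_solution S'.
Proof.
  intros E H t.
  assert (A : forall u, S1 S' u = S1 S u).
  { intros [[a b] c]. unfold S1. rewrite E. reflexivity. }
  assert (B : forall u, S2 S' u = S2 S u).
  { intros [[a b] c]. unfold S2. rewrite E. reflexivity. }
  rewrite ?A, ?B, ?A, ?B. apply H.
Qed.

Theorem corollary5p12 (G : Group) (a b c d m n : Z) :
  two_step_nilpotent G ->
  is_YB_solution (@Smap G a b c d m n) ->
  is_YB_solution (@Smap G d c b a (d * c - n)%Z (a * b - m)%Z).
Proof.
  intros Hn HS. apply (YB_ext (Tw (@Smap G a b c d m n))).
  - intros [x y]. unfold Tw, Smap. simpl.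
    rewrite (Z.mul_comm a b), !(key G Hn). reflexivity.
  - apply YB_Tw. exact HS.
Qed.
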